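(* Let $\mathcal{A}=(Q,\delta,I,F)$ be a complete Büchi automaton, let $p,q\in Q$ with $p\preceq_{\mathit{di}}q$, let $\alpha$ be an infinite word and let $\mathcal{G}_\alpha=(V,E)$ be the run DAG of $\mathcal{A}$ over $\alpha$. Then for all $i\ge0$, if $(p,i)\in V$ and $(q,i)\in V$, then $\mathrm{rank}_\alpha(p,i)\le\mathrm{rank}_\alpha(q,i)$.
   Context: A Büchi automaton is $\mathcal{A}=(Q,\delta,I,F)$ over a finite alphabet $\Sigma$, $\delta:Q\times\Sigma\to2^Q$, complete if $\delta(q,a)\ne\emptyset$ always; $n=|Q|$. A run from $q$ on $\alpha=\alpha_0\alpha_1\cdots$ is a state sequence $\rho$ with $\rho_0=q$, $\rho_{i+1}\in\delta(\rho_i,\alpha_i)$. Direct simulation: in the game from $(p_0,r_0)$, in round $i$ Spoiler picks $p_i\xrightarrow{\alpha_i}p_{i+1}$ and Duplicator answers $r_i\xrightarrow{\alpha_i}r_{i+1}$; a Duplicator strategy is a map $\sigma$ with $\sigma(r,p\xrightarrow{a}p')\in\delta(r,a)$ (no lookahead). Duplicator wins if for all $i$, $p_i\in F$ implies $r_i\in F$. $p\preceq_{\mathit{di}}r$ iff Duplicator has a winning strategy from $(p,r)$. Run DAG: $\mathcal{G}_\alpha=(V,E)$ with $V\subseteq Q\times\omega$, $(q,i)\in V$ iff some run of $\mathcal{A}$ over $\alpha$ from an initial state has $\rho_i=q$, and $((q,i),(q',i'))\in E$ iff $i'=i+1$ and $q'\in\delta(q,\alpha_i)$. A vertex $(p,i)$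 is accepting if $p\in F$; finite in a subgraph if only finitely many vertices are reachable from it there; endangered if it cannot reach an accepting vertex there. Ranks: let $\mathcal{G}^0=\mathcal{G}_\alpha$, $j=0$; repeat until fixpoint or for at most $2n+1$ steps: assign rank $j$ to all finite vertices of $\mathcal{G}^j$, let $\mathcal{G}^{j+1}$ be $\mathcal{G}^j$ without them; assign rank $j+1$ to all endangered vertices of $\mathcal{G}^{j+1}$, let $\mathcal{G}^{j+2}$ be $\mathcal{G}^{j+1}$ without them; $j:=j+2$. Vertices never assigned a rank get rank $\omega$. $\mathrm{rank}_\alpha(v)$ is the rank of $v$. *)

(* Defs.v *)
From mathcomp Require Import all_boot.
From Stdlib Require Import Relation_Operators ClassicalDescription.

Set Implicit Arguments.
Unset Strict Implicit.
Unset Printing Implicit Defensive.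

Record buchi (Q Sigma : finType) := Buchi {
  delta : Q -> Sigma -> {set Q};
  init  : {set Q};
  acc   : {set Q} }.

Section Buchi.
Variables (Q Sigma : finType) (A : buchi Q Sigma).

Definition complete : Prop := forall q a, delta A q a != set0.

(* A Duplicator strategy: sigma r p a p' is Duplicator's answer from r
   to Spoiler's move p -a-> p'. *)
Definition dup_strategy := Q -> Q -> Sigma -> Q -> Q.

Definition valid_strategy (s : dup_strategy) : Prop :=
  forall r p a p', p' \in delta A p a -> s r p a p' \in delta A r a.

Definition spoiler_play (p0 : Q) (ps : nat -> Q) (w : nat -> Sigma) : Prop :=
  ps 0 = p0 /\ forall i, ps i.+1 \in delta A (ps i) (w i).

Fixpoint dup_states (s : dup_strategy) (r0 : Q) (ps : nat -> Q)
    (w : nat -> Sigma) (i : nat) : Q :=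
  match i with
  | 0 => r0
  | i'.+1 => s (dup_states s r0 ps w i') (ps i') (w i') (ps i'.+1)
  end.

Definition dsim (p r : Q) : Prop :=
  exists s : dup_strategy, valid_strategy s /\
    forall ps w, spoiler_play p ps w ->
      forall i, ps i \in acc A -> dup_states s r ps w i \in acc A.

Definition run_from (q : Q) (alpha : nat -> Sigma) (rho : nat -> Q) : Prop :=
  rho 0 = q /\ forall i, rho i.+1 \in delta A (rho i) (alpha i).

Definition inV (alpha : nat -> Sigma) (v : Q * nat) : Prop :=
  exists rho, rho 0 \in init A /\ run_from (rho 0) alpha rho /\ rho v.2 = v.1.

Definition edge (alpha : nat -> Sigma) (v v' : Q * nat) : Prop :=
  inV alpha v /\ inV alpha v' /\ v'.2 = v.2.+1 /\ v'.1 \in delta A v.1 (alpha v.2).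

(* a subgraph is given by its set of vertices (a subset of V); edges are the
   induced ones *)
Definition subedge (alpha : nat -> Sigma) (G : Q * nat -> Prop) (v v' : Q * nat) :=
  G v /\ G v' /\ edge alpha v v'.

Definition reach (alpha : nat -> Sigma) (G : Q * nat -> Prop) (v w : Q * nat) :=
  G v /\ clos_refl_trans _ (subedge alpha G) v w.

Definition finite_in (alpha : nat -> Sigma) (G : Q * nat -> Prop) (v : Q * nat) :=
  exists s : seq (Q * nat), forall w, reach alpha G v w -> w \in s.

Definition endangered_in (alpha : nat -> Sigma) (G : Q * nat -> Prop) (v : Q * nat) :=
  ~ exists w, reach alpha G v w /\ w.1 \in acc A.

Definition removed (alpha : nat -> Sigma) (G : Q * nat -> Prop) (j : nat)
    (v : Q * nat) : Prop :=
  if odd j then endangered_in alpha G v else finite_in alpha G v.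

Fixpoint subgraph (alpha : nat -> Sigma) (j : nat) : Q * nat -> Prop :=
  match j with
  | 0 => inV alpha
  | j'.+1 => fun v => subgraph alpha j' v /\ ~ removed alpha (subgraph alpha j') j' v
  end.

Definition gets_rank (alpha : nat -> Sigma) (j : nat) (v : Q * nat) : Prop :=
  subgraph alpha j v /\ removed alpha (subgraph alpha j) j v.

(* rank: the (unique) j <= 2n assigned to v, None standing for omega *)
Fixpoint rank_from (alpha : nat -> Sigma) (v : Q * nat) (k j : nat) : option nat :=
  match k with
  | 0 => None
  | k'.+1 => if excluded_middle_informative (gets_rank alpha j v) then Some j
             else rank_from alpha v k' j.+1
  end.

Definition rank (alpha : nat -> Sigma) (v : Q * nat) : option nat :=
  rank_from alpha v (2 * #|Q|).+1 0.

End Buchi.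

(* order on {0,1,...} u {omega}, with None = omega *)
Definition rank_le (x y : option nat) : Prop :=
  match x, y with
  | _, None => True
  | None, Some _ => False
  | Some a, Some b => (a <= b)%N
  end.

(* Main.v *)
Require Import Defs.
From mathcomp Require Import all_boot.
From Stdlib Require Import Relation_Operators Operators_Properties Classical.
From Stdlib Require ClassicalDescription.

Set Implicit Arguments.
Unset Strict Implicit.
Unset Printing Implicit Defensive.

Section Proof.
Variables (Q Sigma : finType) (A : buchi Q Sigma) (alpha : nat -> Sigma).
Hypothesis Hc : complete A.

Definition win (s : dup_strategy Q Sigma) (x r : Q) :=
  forall ps w, spoiler_play A x ps w ->
      forall i, ps i \in acc A -> dup_states s r ps w i \in acc A.

Lemma win_shift s x r a x' : win s x r -> x' \in delta A x a ->
  win s x' (s r x a x').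
Proof.
move=> W Hx' ps' w' [H0 Hs].
pose ps n := if n is n'.+1 then ps' n' else x.
pose w n := if n is n'.+1 then w' n' else a.
have Hp : spoiler_play A x ps w.
  split=> // [[|n]] /=; first by rewrite H0.
  exact: Hs.
have E : forall n, dup_states s r ps w n.+1 = dup_states s (s r x a x') ps' w' n.
  elim=> [|n IH] /=; first by rewrite H0.
  by rewrite -IH.
move=> i Hi; rewrite -E; exact: (W ps w Hp i.+1 Hi).
Qed.

Lemma pick_in (S : {set Q}) : S != set0 -> exists z, [pick z in S] = Some z /\ z \in S.
Proof.
move=> HS; case: pickP => [z Hz|H0]; first by exists z.
by move: HS; case/set0Pn=> z; rewrite H0.
Qed.

Lemma inV_ext r k r' : inV A alpha (r, k) -> r' \in delta A r (alpha k) ->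
  inV A alpha (r', k.+1).
Proof.
move=> [rho [Hi [[_ Hr] Hk]]] Hr' /=; simpl in Hk.
pose f := fix f n := match n with
  | 0 => rho 0
  | n'.+1 => if n' < k then rho n'.+1 else if n' == k then r'
             else odflt (f n') [pick z in delta A (f n') (alpha n')] end.
have Ef : forall n, n <= k -> f n = rho n.
  elim=> [|n IH] // Hn /=; by rewrite Hn.
exists f; split => //; split; last first.
  by rewrite /= ltnn eqxx.
split => // n /=.
case: ltnP => Hn.
  by rewrite Ef ?(ltnW Hn) // Hr.
case: eqP => [->|Hne]; first by rewrite Ef // Hk.
have [z [-> Hz]] := pick_in (Hc (f n) (alpha n)); exact Hz.
Qed.

Lemma dsim_acc x r : dsim A x r -> x \in acc A -> r \in acc A.
Proof.
move=> [s [_ W]] Hx.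
pose ps := fix ps n := match n with 0 => x
  | n'.+1 => odflt x [pick z in delta A (ps n') (alpha n')] end.
have Hp : spoiler_play A x ps alpha.
  split=> // n /=.
  have [z [-> Hz]] := pick_in (Hc (ps n) (alpha n)); exact Hz.
exact: (W _ _ Hp 0 Hx).
Qed.

Lemma sub_inV j v : subgraph A alpha j v -> inV A alpha v.
Proof. elim: j v => [|j IH] v //= [H _]; exact: IH. Qed.

Lemma sim_reach j p q i :
  (forall x y k, subgraph A alpha j (x, k) -> inV A alpha (y, k) -> dsim A x y ->
     subgraph A alpha j (y, k)) ->
  dsim A p q -> subgraph A alpha j (p, i) -> inV A alpha (q, i) ->
  forall v, reach A alpha (subgraph A alpha j) (p, i) v ->
    exists r, dsim A v.1 r /\ reach A alpha (subgraph A alpha j) (q, i) (r, v.2).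
Proof.
move=> HG Hpq Gp Vq v [_ R0]; have R := clos_rt_rtn1 _ _ _ _ R0; clear R0.
have Gq := HG _ _ _ Gp Vq Hpq.
elim: R => [|y z Hyz _ [r [[s [Vs W]] [_ Rr]]]].
  by exists q; split => //; split => //; apply: rt_refl.
move: Hyz => [Gy [Gz [Vy [Vz [Ez Hz]]]]].
move: y z Gy Gz Vy Vz Ez Hz W Rr => [y1 y2] [z1 z2] /= Gy Gz Vy Vz Ez Hz W Rr.
subst z2.
set r' := s r y1 (alpha y2) z1.
have Wr' := win_shift W Hz.
have Gr : subgraph A alpha j (r, y2).
  have := clos_rt_rtn1 _ _ _ _ Rr; case => // ? ? [_ [H _]] _ //.
have Vr' : inV A alpha (r', y2.+1).
  apply: inV_ext; first exact: sub_inV Gr.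
  exact: Vs.
have Gr' : subgraph A alpha j (r', y2.+1).
  apply: HG Gz Vr' _; by exists s.
exists r'; split; first by exists s.
split => //; apply: rt_trans Rr _; apply: rt_step.
split => //; split => //; split; first exact: sub_inV Gr.
split => //; split => //=; exact: Vs.
Qed.

Lemma main j : forall x y k, subgraph A alpha j (x, k) -> inV A alpha (y, k) ->
  dsim A x y -> subgraph A alpha j (y, k).
Proof.
elim: j => [|j IH] x y k //= [Gx NR] Vy Hxy.
have Gy := IH _ _ _ Gx Vy Hxy.
split => //.
have SR := sim_reach IH Hxy Gx Vy.
rewrite /removed in NR *; case: (odd j) in NR *.
- move=> Hend; apply: NR => -[w [Rw Aw]].
  have [r [Hr Rr]] := SR w Rw.
  apply: Hend; exists (r, w.2); split => //; exact: dsim_acc Hr Aw.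
- move=> [s Hs]; apply: NR.
  pose M := \max_(w <- s) w.2.
  exists [seq (x0, k0) | x0 <- enum Q, k0 <- iota 0 M.+1].
  move=> [x0 k0] Rw.
  have [r [_ Rr]] := SR _ Rw.
  have Hin := Hs _ Rr.
  have Hle : k0 <= M := leq_bigmax_seq (F := fun w : Q * nat => w.2) _ Hin isT.
  apply/allpairsP; exists (x0, k0); split => //=; first by rewrite mem_enum.
  by rewrite -[0 :: _]/(iota 0 M.+1) mem_iota.
Qed.

Lemma rank_from_some v k j0 b : rank_from A alpha v k j0 = Some b ->
  gets_rank A alpha b v /\ j0 <= b < j0 + k.
Proof.
elim: k j0 => [|k IH] j0 //=.
case: ClassicalDescription.excluded_middle_informative => [H [<-]|_ /IH [H1 /andP [H2 H3]]].
  by rewrite leqnn addnS ltnS leq_addr.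
split=> //; rewrite (ltnW H2) /=; by rewrite addnS -addSn.
Qed.

Lemma rank_from_find v k j0 m : gets_rank A alpha m v -> j0 <= m < j0 + k ->
  exists m', m' <= m /\ rank_from A alpha v k j0 = Some m'.
Proof.
elim: k j0 => [|k IH] j0 Hm /andP [H1 H2] /=.
  by rewrite addn0 in H2; move: (leq_ltn_trans H1 H2); rewrite ltnn.
case: (ClassicalDescription.excluded_middle_informative (gets_rank A alpha j0 v)) => [Hg|Hn]; first by exists j0.
apply: IH => //; rewrite addSn -addnS H2 andbT ltn_neqAle H1 andbT.
by apply/eqP => E; subst m.
Qed.

Lemma drop_point v b : inV A alpha v -> ~ subgraph A alpha b.+1 v ->
  exists j, j <= b /\ gets_rank A alpha j v.
Proof.
move=> V; elim: b => [|b IH] /= H.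
  exists 0; split => //; split => //.
  by apply: NNPP => Hn; apply: H.
case: (classic (subgraph A alpha b.+1 v)) => Hb.
  exists b.+1; split => //; split => //; apply: NNPP => Hn; apply: H; split => //.
have [j [Hj Hg]] := IH Hb; exists j; split => //; exact: leqW.
Qed.

End Proof.

Theorem lemma7 (Q Sigma : finType) (A : buchi Q Sigma) (p q : Q)
  (alpha : nat -> Sigma) :
  complete A -> dsim A p q ->
  forall i : nat, inV A alpha (p, i) -> inV A alpha (q, i) ->
    rank_le (rank A alpha (p, i)) (rank A alpha (q, i)).
Proof.
move=> Hc Hpq i Vp Vq.
rewrite /rank.
case Eq: (rank_from A alpha (q, i) _ 0) => [b|]; last by case: rank_from.
have [[Gq Rq] /andP [_ Hb]] := rank_from_some Eq.
have NGp : ~ subgraph A alpha b.+1 (p, i).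
  move=> Gp; have := main Hc Gp Vq Hpq => /= [[_]]; exact.
have [j [Hj Hg]] := drop_point Vp NGp.
have [m' [Hm' ->]] := rank_from_find (k := (2 * #|Q|).+1) (j0 := 0) Hg
   (leq_ltn_trans Hj Hb).
exact: leq_trans Hm' Hj.
Qed.
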